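(* Let $\mathcal{G}$ be a class of graphs on vertex set $[p]$, fix $\lambda>0$, and let $\mathcal{T}\subseteq\mathcal{G}$. For every $\epsilon>0$ and every $\epsilon$-covering $C_{\mathcal{T}}(\epsilon)$ of $\mathcal{T}$, every estimator $\phi$ satisfies $$p_{\max}\;\ge\;1-\frac{\log|C_{\mathcal{T}}(\epsilon)|+n\epsilon+\log 2}{\log|\mathcal{T}|}.$$
   Context: For a graph $G=([p],E)$ and $\lambda>0$, the Ising model is $f_G(\mathbf{x})=\frac{1}{Z}\exp\big(\sum_{(i,j)\in E}\lambda x_ix_j\big)$ on $\{-1,+1\}^p$. An estimator is a map $\phi:\{-1,+1\}^{np}\to\mathcal{G}$ applied to $n$ i.i.d. samples from $f_G$, giving $\hat G$; $p_{\max}=\max_{G\in\mathcal{G}}\Pr(\hat G\ne G)$. $D(f\|g)=\sum_x f(x)\log(f(x)/g(x))$ is the KL-divergence. An $\epsilon$-covering of $\mathcal{T}$ is a set $C_{\mathcal{T}}(\epsilon)\subseteq\mathcal{G}$ such that for every $G\in\mathcal{T}$ there is $G'\in C_{\mathcal{T}}(\epsilon)$ with $D(f_G\|f_{G'})\le\epsilon$. *)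

(* Defs.v *)
From mathcomp Require Import all_boot all_order all_algebra.
From mathcomp Require Import reals.
From mathcomp Require Import sequences exp.
Set Implicit Arguments. Unset Strict Implicit. Unset Printing Implicit Defensive.
Import Order.TTheory GRing.Theory Num.Theory.
Local Open Scope ring_scope.

Definition config (p : nat) := {ffun 'I_p -> bool}.
Definition spin {R : realType} (b : bool) : R := if b then 1 else -1.

(* A graph on vertex set [p] = 'I_p: its edge set, each undirected edge {i,j}
   stored once as the ordered pair (i,j) with i < j. *)
Definition graph (p : nat) := {set 'I_p * 'I_p}.
Definition is_graph (p : nat) (G : graph p) : Prop :=
  forall e, e \in G -> (e.1 < e.2)%N.

Definition ising_weight {R : realType} (p : nat) (lam : R) (G : graph p)
  (x : config p) : R :=
  expR (\sum_(e in G) lam * spin (x e.1) * spin (x e.2)).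
Definition ising_Z {R : realType} (p : nat) (lam : R) (G : graph p) : R :=
  \sum_(x : config p) ising_weight lam G x.
Definition ising {R : realType} (p : nat) (lam : R) (G : graph p)
  (x : config p) : R := ising_weight lam G x / ising_Z lam G.

Definition KL {R : realType} (T : finType) (f g : T -> R) : R :=
  \sum_(x : T) f x * ln (f x / g x).

Definition samples (n p : nat) := {ffun 'I_n -> config p}.

Definition err_prob {R : realType} (n p : nat) (lam : R)
  (phi : samples n p -> graph p) (G : graph p) : R :=
  \sum_(s : samples n p | phi s != G) \prod_(k < n) ising lam G (s k).

Definition p_max {R : realType} (n p : nat) (lam : R) (cG : {set graph p})
  (phi : samples n p -> graph p) : R :=
  \big[Num.max/0]_(G in cG) err_prob lam phi G.

Definition is_covering {R : realType} (p : nat) (lam : R) (cG T C : {set graph p})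
  (eps : R) : Prop :=
  C \subset cG /\
  forall G, G \in T -> exists2 G', G' \in C &
    KL (ising lam G) (ising lam G') <= eps.

(* Main.v *)
Require Import Defs.
From mathcomp Require Import all_boot all_order all_algebra.
From mathcomp Require Import reals sequences exp.
From mathcomp Require Import ring lra.
Import Order.TTheory GRing.Theory Num.Theory.
Local Open Scope ring_scope.
Set Implicit Arguments. Unset Strict Implicit.

Section Aux.
Variable R : realType.

Lemma ln_le_sub1 (x : R) : 0 < x -> ln x <= x - 1.
Proof.
move=> x0; have := @le_ln1Dx R (x - 1).
have -> : 1 + (x - 1) = x by ring.
apply; lra.
Qed.

Lemma gibbs_pt (a b : R) : 0 < a -> 0 < b -> a - b <= a * ln (a / b).
Proof.
move=> a0 b0.
have h := @ln_le_sub1 (b / a) (divr_gt0 b0 a0).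
have e : ln (a / b) = - ln (b / a).
  by rewrite -lnV ?posrE ?divr_gt0 // invf_div.
rewrite e mulrN.
have : a * ln (b / a) <= a * (b / a - 1) by rewrite ler_pM2l.
rewrite mulrBr mulr1 mulrCA divff ?gt_eqF // mulr1; lra.
Qed.

Lemma ln_prod n (F : 'I_n -> R) : (forall i, 0 < F i) ->
  ln (\prod_i F i) = \sum_i ln (F i).
Proof.
elim: n F => [|n IH] F Fp; first by rewrite !big_ord0 ln1.
rewrite big_ord_recr big_ord_recr /= lnM ?posrE //; last first.
  by apply: prodr_gt0 => i _.
by rewrite IH.
Qed.

Lemma ising_weight_gt0 p (lam : R) (G : graph p) x : 0 < ising_weight lam G x.
Proof. exact: expR_gt0. Qed.

Lemma ising_Z_gt0 p (lam : R) (G : graph p) : 0 < ising_Z lam G.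
Proof.
rewrite /ising_Z (bigD1 [ffun _ => true]) //=.
apply: ltr_pwDl; first exact: ising_weight_gt0.
by apply: sumr_ge0 => x _; apply: ltW; apply: ising_weight_gt0.
Qed.

Lemma ising_gt0 p (lam : R) (G : graph p) x : 0 < ising lam G x.
Proof. by rewrite /ising divr_gt0 // ?ising_weight_gt0 ?ising_Z_gt0. Qed.

Lemma ising_sum1 p (lam : R) (G : graph p) : \sum_x ising lam G x = 1.
Proof.
by rewrite /ising -mulr_suml divff // gt_eqF // ising_Z_gt0.
Qed.

Definition prodd n p (f : config p -> R) (s : samples n p) : R :=
  \prod_k f (s k).

Lemma sum_prodd n p (F : 'I_n -> config p -> R) :
  \sum_(s : samples n p) \prod_k F k (s k) = \prod_k \sum_x F k x.
Proof. by rewrite bigA_distr_bigA. Qed.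

Lemma prodd_gt0 n p f (s : samples n p) : (forall x, 0 < f x) -> 0 < prodd f s.
Proof. by move=> fp; apply: prodr_gt0 => k _. Qed.

Lemma prodd_sum1 n p (f : config p -> R) : \sum_x f x = 1 ->
  \sum_(s : samples n p) prodd f s = 1.
Proof.
move=> h; rewrite /prodd (sum_prodd (fun _ => f)); under eq_bigr do rewrite h.
by rewrite prodr_const expr1n.
Qed.

Lemma marginal n p (f h : config p -> R) (k : 'I_n) : \sum_x f x = 1 ->
  \sum_(s : samples n p) prodd f s * h (s k) = \sum_x f x * h x.
Proof.
move=> f1.
pose F j x := if j == k then f x * h x else f x.
transitivity (\sum_(s : samples n p) \prod_j F j (s j)).
  apply: eq_bigr => s _; rewrite /prodd (bigD1 k) //= [RHS](bigD1 k) //=.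
  rewrite /F eqxx; under [in RHS]eq_bigr => j /negbTE -> do [].
  by rewrite mulrAC.
rewrite (sum_prodd F) (bigD1 k) //= [X in _ * X]big1 ?mulr1; first by rewrite /F eqxx.
move=> j /negbTE Hj; rewrite /F Hj; exact: f1.
Qed.

Lemma tensor_KL n p (f g : config p -> R) :
  (forall x, 0 < f x) -> (forall x, 0 < g x) -> \sum_x f x = 1 ->
  \sum_(s : samples n p) prodd f s * ln (prodd f s / prodd g s)
  = n%:R * KL f g.
Proof.
move=> fp gp f1.
transitivity (\sum_(s : samples n p) \sum_k prodd f s * ln (f (s k) / g (s k))).
  apply: eq_bigr => s _; rewrite -mulr_sumr /prodd -prodf_div ln_prod //.
  by move=> k; apply: divr_gt0.
rewrite exchange_big /=.
under eq_bigr do rewrite (@marginal n p f (fun x => ln (f x / g x))) //.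
by rewrite sumr_const card_ord mulr_natl.
Qed.


Lemma sum_w (p n : nat) (T : {set graph p}) (phi : samples n p -> graph p) s :
  \sum_(G in T) (1 + (#|T|%:R - 1) * (phi s == G)%:R) <= 2 * #|T|%:R :> R.
Proof.
rewrite big_split /= sumr_const -mulr_sumr.
have h1 : \sum_(G in T) ((phi s == G)%:R : R) <= 1.
  case: (boolP (phi s \in T)) => hs.
    rewrite (bigD1 (phi s)) //= eqxx big1 ?addr0 // => G /andP[_ /negbTE].
    by rewrite eq_sym => ->.
  rewrite big1 // => G GT; case: eqP => // e; by move: hs; rewrite e GT.
have h0 : 0 <= \sum_(G in T) ((phi s == G)%:R : R) by apply: sumr_ge0 => *.
case: (posnP #|T|) => [->|Tp].
  by rewrite mulr0 sub0r; nra.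
have : 1 <= #|T|%:R :> R by rewrite ler1n.
set m := #|T|%:R; nra.
Qed.

End Aux.

Theorem corollary2 (R : realType) (p n : nat) (lam : R) (cG T : {set graph p}) :
  (forall G, G \in cG -> is_graph G) ->
  0 < lam ->
  T \subset cG ->
  (1 < #|T|)%N ->
  forall (eps : R) (C : {set graph p}),
    0 < eps ->
    is_covering lam cG T C eps ->
    forall phi : samples n p -> graph p,
      (forall s, phi s \in cG) ->
      p_max lam cG phi >=
        1 - (ln (#|C|%:R) + n%:R * eps + ln 2) / ln (#|T|%:R).
Proof.
move=> _ _ TcG T1 eps C eps0 [_ cov] phi _.
set M := #|T|%:R : R.
set NC := #|C|%:R : R.
set K := ln NC + n%:R * eps.
have [G0 G0T] : exists G0, G0 \in T.
  by apply/set0Pn; rewrite -card_gt0 (ltn_trans _ T1).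
have NCp : 0 < NC.
  have [c cC _] := cov _ G0T; rewrite ltr0n card_gt0; apply/set0Pn; by exists c.
have Mp : 1 < M by rewrite ltr1n.
have lnMp : 0 < ln M by apply: ln_gt0.
pose P (G : graph p) (s : samples n p) := prodd (ising lam G) s.
have Pp G s : 0 < P G s by apply: prodd_gt0 => x; apply: ising_gt0.
have P1 G : \sum_s P G s = 1 by apply: prodd_sum1; apply: ising_sum1.
pose Qbar s := NC^-1 * \sum_(c in C) P c s.
have Qp s : 0 < Qbar s.
  rewrite /Qbar mulr_gt0 ?invr_gt0 //.
  have [c cC _] := cov _ G0T; rewrite (bigD1 c) //=.
  apply: ltr_pwDl; first exact: Pp.
  by apply: sumr_ge0 => *; apply: ltW.
have Q1 : \sum_s Qbar s = 1.
  rewrite /Qbar -mulr_sumr exchange_big /=.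
  under eq_bigr do rewrite P1.
  by rewrite sumr_const mulVf // gt_eqF.
pose L G := \sum_s P G s * ln (P G s / Qbar s).
have Lle G : G \in T -> L G <= K.
  move=> GT; have [c cC KLc] := cov _ GT.
  have step s : P G s * ln (P G s / Qbar s) <=
      P G s * ln (P G s / P c s) + P G s * ln NC.
    rewrite -mulrDr ler_pM2l // -lnM ?posrE ?divr_gt0 //.
    rewrite ler_ln ?posrE ?mulr_gt0 ?divr_gt0 //.
    have hQ : NC^-1 * P c s <= Qbar s.
      rewrite /Qbar ler_pM2l ?invr_gt0 // (bigD1 c) //= lerDl.
      by apply: sumr_ge0 => *; apply: ltW.
    have -> : P G s / P c s * NC = P G s / (NC^-1 * P c s).
      by rewrite invfM invrK mulrCA mulrA; field; rewrite ?gt_eqF.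
    have hPG := Pp G s; have hQs := Qp s; have hPc := Pp c s.
    have hs : 0 < \sum_(c0 in C) P c0 s.
      by move: (Qp s); rewrite /Qbar pmulr_rgt0 ?invr_gt0.
    rewrite ler_pM2l // lef_pV2 ?posrE ?mulr_gt0 ?invr_gt0 //.
    have h1 := Qp s; rewrite -invr_gt0 in h1; exact: h1.
    have h2 := Pp c s; rewrite -invr_gt0 in h2; exact: h2.
  apply: le_trans (ler_sum _ (fun s _ => step s)) _.
  rewrite big_split /= -mulr_suml P1 mul1r tensor_KL //; last first.
  - exact: ising_sum1.
  - by move=> x; apply: ising_gt0.
  - by move=> x; apply: ising_gt0.
  have := ler_wpM2l (ler0n _ n) KLc; rewrite /K; lra.
pose w G s : R := 1 + (M - 1) * (phi s == G)%:R.
pose A G := \sum_(s | phi s == G) P G s.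
have Lge G : ln M * A G - ln 2 + 1 - 2^-1 * \sum_s Qbar s * w G s <= L G.
  have pt s : P G s - Qbar s * w G s / 2 + (if phi s == G then P G s * ln M else 0)
      - P G s * ln 2 <= P G s * ln (P G s / Qbar s).
    have wp : 0 < w G s.
      rewrite /w; case: (phi s == G); rewrite /= ?mulr1 ?mulr0 ?addr0 //; lra.
    have hQ := Qp s; have hP := Pp G s.
    have bp : 0 < Qbar s * w G s / 2 by apply: divr_gt0 => //; apply: mulr_gt0.
    have g := gibbs_pt hP bp.
    have e : ln (P G s / Qbar s) =
        ln (P G s / (Qbar s * w G s / 2)) + ln (w G s) - ln 2.
      rewrite -addrA -ln_div ?posrE // -lnM ?posrE ?divr_gt0 //.
      congr ln; field; rewrite ?gt_eqF //. exact: mulr_gt0.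
    have lw : P G s * ln (w G s) = if phi s == G then P G s * ln M else 0.
      rewrite /w; case: (phi s == G); rewrite /= ?mulr1 ?mulr0 ?addr0 ?ln1 ?mulr0 //.
      by congr (_ * ln _); ring.
    rewrite e (mulrBr (P G s)) (mulrDr (P G s)) lw; lra.
  apply: le_trans (ler_sum _ (fun s _ => pt s)).
  rewrite sumrB big_split sumrB /= -big_mkcond -!mulr_suml P1 mul1r.
  rewrite /A; lra.
have sumL : \sum_(G in T) L G <= M * K.
  apply: le_trans (ler_sum _ (fun G GT => Lle G GT)) _.
  by rewrite sumr_const mulr_natl.
have Wsum : \sum_(G in T) \sum_s Qbar s * w G s <= 2 * M.
  rewrite exchange_big /=.
  under eq_bigr do rewrite -mulr_sumr.
  apply: le_trans (_ : \sum_s Qbar s * (2 * M) <= _).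
    apply: ler_sum => s _; apply: ler_wpM2l; first exact: ltW.
    exact: (@sum_w R p n T phi s).
  by rewrite -mulr_suml Q1 mul1r.
have sumLge : ln M * (\sum_(G in T) A G) - M * ln 2 + M
    - 2^-1 * \sum_(G in T) \sum_s Qbar s * w G s <= \sum_(G in T) L G.
  apply: le_trans (ler_sum _ (fun G _ => Lge G)).
  rewrite sumrB -mulr_sumr (big_split _ _ _ (fun i => ln M * A i - ln 2) (fun _ => 1)) /= sumrB -mulr_sumr !sumr_const.
  by rewrite -[ln 2 *+ _]mulr_natl -/M.
have errE G : err_prob lam phi G = 1 - A G.
  rewrite -(P1 G) (bigID (fun s => phi s == G)) /= addrC addrK //.
have pmax G : G \in T -> err_prob lam phi G <= p_max lam cG phi.
  move=> GT; rewrite /p_max; apply: (le_bigmax_cond _ (P := fun G => G \in cG)).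
  exact: (subsetP TcG).
have hS : M * p_max lam cG phi >= M - \sum_(G in T) A G.
  apply: le_trans (_ : \sum_(G in T) p_max lam cG phi <= _); last first.
    by rewrite sumr_const mulr_natl.
  apply: le_trans (ler_sum _ (fun G GT => pmax G GT)).
  rewrite [X in _ <= X](eq_bigr (fun G => 1 - A G)); last by move=> G _; exact: errE.
  by rewrite sumrB sumr_const.
set S := \sum_(G in T) A G.
set pm := p_max lam cG phi.
set Y := (K + ln 2) / ln M.
have hY : K + ln 2 = ln M * Y by rewrite /Y mulrC divfK ?gt_eqF.
have h1 : ln M * S <= M * (K + ln 2).
  move: sumL Wsum sumLge.
  set X := ln M * S; set Z := \sum_(G in T) \sum_s Qbar s * w G s.
  set LL := \sum_(G in T) L G => a b c; rewrite [M * (_ + _)]mulrDr; lra.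
rewrite hY mulrCA ler_pM2l // in h1.
have h3 : M * (1 - Y) <= M * pm.
  rewrite mulrBr mulr1; move: h1 hS; set MY := M * Y; set Mp0 := M * pm.
  move=> a; apply: le_trans; rewrite lerD2l lerN2; exact: a.
by rewrite ler_pM2l ?(lt_trans _ Mp) in h3.
Qed.
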